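(* Let $Q$ be a fixed IPC formula and let $\phi : K \to L$ be the map defined in the context. Then for every IPC formula $Z \in L$, $\phi(Z) \equiv QQZ$, i.e. $\phi(Z) \vdash_L (Z \supset Q) \supset Q$ and $(Z \supset Q) \supset Q \vdash_L \phi(Z)$.
   Context: $K$ is the set of PC formulas: built from propositional variables and a propositional constant $\mathfrak{f}$ using only the conditional $\supset$. $L \subseteq K$ is the set of IPC formulas: built from propositional variables using only $\supset$. IPC has Modus Ponens as its only rule and axioms all instances (with IPC formulas) of $(\#1)\ A \supset (B \supset A)$; $(\#2)\ [A \supset (B \supset C)] \supset [(A \supset B) \supset (A \supset C)]$; $(\mathbb{P})\ [(A \supset B) \supset A] \supset A$. $\Gamma \vdash_L Y$ means there is a deduction of $Y$ from hypotheses $\Gamma$ in IPC; $X \equiv Y$ means $X \vdash_L Y$ and $Y \vdash_L X$. For an IPC formula $Z$ write $QZ := Z \supset Q$ and $QQZ := (Z \supset Q)\supset Q$. The map $\phi : K \to L$ is defined by induction on the number of conditionals: $\phi(\mathfrak{f}) = Q$; $\phi(p) = QQp = (p \supset Q) \supset Q$ for each propositional variable $p$; and $\phi(X \supset Y) = \phi(X) \supset \phi(Y)$. *)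

(* Defs.v *)
Inductive formL : Type :=
| LVar : nat -> formL
| LImp : formL -> formL -> formL.

Inductive formK : Type :=
| KVar : nat -> formK
| KFalse : formK
| KImp : formK -> formK -> formK.

Fixpoint embedL (A : formL) : formK :=
  match A with
  | LVar p => KVar p
  | LImp A B => KImp (embedL A) (embedL B)
  end.

Definition QQ (Q Z : formL) : formL := LImp (LImp Z Q) Q.

Fixpoint phi (Q : formL) (X : formK) : formL :=
  match X with
  | KFalse => Q
  | KVar p => QQ Q (LVar p)
  | KImp X Y => LImp (phi Q X) (phi Q Y)
  end.

Inductive deriv (Gamma : formL -> Prop) : formL -> Prop :=
| d_hyp : forall A, Gamma A -> deriv Gamma A
| d_ax1 : forall A B, deriv Gamma (LImp A (LImp B A))
| d_ax2 : forall A B C,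
    deriv Gamma (LImp (LImp A (LImp B C)) (LImp (LImp A B) (LImp A C)))
| d_axP : forall A B, deriv Gamma (LImp (LImp (LImp A B) A) A)
| d_mp : forall A B, deriv Gamma (LImp A B) -> deriv Gamma A -> deriv Gamma B.

Definition derivFrom (X Y : formL) : Prop := deriv (fun A => A = X) Y.

Definition equivL (X Y : formL) : Prop := derivFrom X Y /\ derivFrom Y X.

(* Main.v *)
Require Import Defs.

Definition ext (G : formL -> Prop) (A : formL) : formL -> Prop :=
  fun X => X = A \/ G X.

Lemma mono (G1 G2 : formL -> Prop) B :
  deriv G1 B -> (forall A, G1 A -> deriv G2 A) -> deriv G2 B.
Proof.
  intros D H; induction D.
  - auto.
  - apply d_ax1.
  - apply d_ax2.
  - apply d_axP.
  - eapply d_mp; eauto.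
Qed.

Lemma idI G A : deriv G (LImp A A).
Proof.
  eapply d_mp. eapply d_mp. apply (d_ax2 G A (LImp A A) A).
  apply d_ax1. apply (d_ax1 G A A).
Qed.

Lemma intro G A B : deriv (ext G A) B -> deriv G (LImp A B).
Proof.
  intro D; induction D.
  - destruct H as [->|H]. apply idI.
    eapply d_mp. apply d_ax1. apply d_hyp; auto.
  - eapply d_mp. apply d_ax1. apply d_ax1.
  - eapply d_mp. apply d_ax1. apply d_ax2.
  - eapply d_mp. apply d_ax1. apply d_axP.
  - eapply d_mp. eapply d_mp. apply d_ax2. eauto. eauto.
Qed.

Ltac hyp := apply d_hyp; unfold ext;
  repeat (first [left; reflexivity | right]); reflexivity.

Lemma peirceQ G Q R : deriv (ext G (LImp Q R)) Q -> deriv G Q.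
Proof.
  intro D. eapply d_mp. apply (d_axP G Q R). apply intro. exact D.
Qed.

Lemma dir1 Q A B :
  derivFrom (LImp (QQ Q A) (QQ Q B)) (QQ Q (LImp A B)).
Proof.
  unfold derivFrom, QQ.
  apply intro. apply (peirceQ _ _ B).
  eapply d_mp.
  - eapply d_mp. { hyp. }
    apply intro. apply (d_mp _ (LImp A B)). { hyp. }
    apply intro. apply (d_mp _ Q). { hyp. }
    apply (d_mp _ A). { hyp. } hyp.
  - apply intro. eapply d_mp. { hyp. } apply intro. hyp.
Qed.

Lemma dir2 Q A B :
  derivFrom (QQ Q (LImp A B)) (LImp (QQ Q A) (QQ Q B)).
Proof.
  unfold derivFrom, QQ.
  apply intro. apply intro. apply (d_mp _ (LImp (LImp A B) Q)). { hyp. }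
  apply intro. apply (d_mp _ (LImp A Q)). { hyp. }
  apply intro. apply (d_mp _ B). { hyp. } apply (d_mp _ A). { hyp. } hyp.
Qed.

Lemma fromI X Y G : derivFrom X Y -> deriv G (LImp X Y).
Proof.
  intro D. apply intro. eapply mono. exact D.
  intros A ->. hyp.
Qed.

Lemma trans X Y Z : derivFrom X Y -> derivFrom Y Z -> derivFrom X Z.
Proof.
  intros H1 H2. eapply d_mp. apply fromI. exact H2.
  exact H1.
Qed.

Lemma cong X X' Y Y' : derivFrom X' X -> derivFrom Y Y' ->
  derivFrom (LImp X Y) (LImp X' Y').
Proof.
  intros H1 H2. unfold derivFrom. apply intro.
  eapply d_mp. apply fromI; exact H2.
  eapply d_mp. { hyp. }
  eapply d_mp. apply fromI; exact H1. hyp.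
Qed.

Theorem theorem5 (Q Z : formL) :
  equivL (phi Q (embedL Z)) (QQ Q Z).
Proof.
  induction Z as [p|A IHA B IHB]; simpl.
  - split; apply d_hyp; reflexivity.
  - destruct IHA as [A1 A2], IHB as [B1 B2]. split.
    + eapply trans. apply cong; eassumption. apply dir1.
    + eapply trans. apply dir2. apply cong; eassumption.
Qed.
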